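(* Let $M$ be a metrizable space. (1) If $M$ is a Krasinkiewicz space, then every open subset of $M$ is a Krasinkiewicz space. (2) If every compact subset of $M$ is contained in a subset of $M$ which is a Krasinkiewicz space, then $M$ is a Krasinkiewicz space.
   Context: For a compact metrizable $X$, a map $g\colon X\to M$ is a Krasinkiewicz map if every subcontinuum of $X$ is either contained in a fiber of $g$ or contains a component of some fiber of $g$. A metrizable space $M$ is a Krasinkiewicz space if for every compact metrizable $X$ the Krasinkiewicz maps are dense in $C(X,M)$ with the uniform convergence topology. *)

(* Defs.v *)
From Stdlib Require Import Reals Lra List.
From Stdlib Require Import ProofIrrelevance.
Open Scope R_scope.

(** A metrizable space is represented by a type equipped with a compatible metric. *)
Record MetricSpace : Type := MkMetricSpace {
  mcarrier :> Type;
  mdist : mcarrier -> mcarrier -> R;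
  mdist_eq0 : forall x y, mdist x y = 0 <-> x = y;
  mdist_sym : forall x y, mdist x y = mdist y x;
  mdist_tri : forall x y z, mdist x z <= mdist x y + mdist y z
}.

Arguments mdist {m} _ _.

Section Topology.
Variable X : MetricSpace.

Definition mset := X -> Prop.

Definition is_open (U : mset) : Prop :=
  forall x, U x -> exists eps, 0 < eps /\ forall y, mdist x y < eps -> U y.

Definition subset (A B : mset) : Prop := forall x, A x -> B x.

Definition is_compact (K : mset) : Prop :=
  forall (I : Type) (U : I -> mset),
    (forall i, is_open (U i)) ->
    subset K (fun x => exists i, U i x) ->
    exists l : list I, subset K (fun x => exists i, In i l /\ U i x).

Definition compact_space : Prop := is_compact (fun _ => True).

Definition is_connected (A : mset) : Prop :=
  forall U V : mset, is_open U -> is_open V ->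
    subset A (fun x => U x \/ V x) ->
    (forall x, A x -> U x -> V x -> False) ->
    subset A U \/ subset A V.

Definition is_continuum (A : mset) : Prop :=
  (exists x, A x) /\ is_compact A /\ is_connected A.

Definition is_component (C F : mset) : Prop :=
  (exists x, C x) /\ subset C F /\ is_connected C /\
  forall D : mset, is_connected D -> subset C D -> subset D F -> subset D C.

End Topology.

Arguments is_open {X} U.
Arguments subset {X} A B.
Arguments is_compact {X} K.
Arguments is_connected {X} A.
Arguments is_continuum {X} A.
Arguments is_component {X} C F.

Definition continuous {X Y : MetricSpace} (f : X -> Y) : Prop :=
  forall x eps, 0 < eps -> exists delta, 0 < delta /\
    forall y, mdist x y < delta -> mdist (f x) (f y) < eps.

Definition fiber {X M : MetricSpace} (g : X -> M) (y : M) : mset X :=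
  fun x => g x = y.

Definition krasinkiewicz_map {X M : MetricSpace} (g : X -> M) : Prop :=
  forall K : mset X, is_continuum K ->
    (exists y, subset K (fiber g y)) \/
    (exists y (C : mset X), is_component C (fiber g y) /\ subset C K).

(** Krasinkiewicz space: for every compact metrizable X, the Krasinkiewicz maps
    are dense in C(X,M) with the topology of uniform convergence. *)
Definition krasinkiewicz_space (M : MetricSpace) : Prop :=
  forall X : MetricSpace, compact_space X ->
    forall f : X -> M, continuous f ->
      forall eps, 0 < eps ->
        exists g : X -> M, continuous g /\ krasinkiewicz_map g /\
          forall x, mdist (f x) (g x) < eps.

Definition sub_dist (M : MetricSpace) (P : M -> Prop)
  (a b : {x : M | P x}) : R := mdist (proj1_sig a) (proj1_sig b).

Lemma sub_dist_eq0 (M : MetricSpace) (P : M -> Prop) :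
  forall a b, sub_dist M P a b = 0 <-> a = b.
Proof.
  intros [a Ha] [b Hb]; unfold sub_dist; simpl; split.
  - intros H. apply mdist_eq0 in H. subst b.
    rewrite (proof_irrelevance _ Ha Hb). reflexivity.
  - intros H. inversion H. apply mdist_eq0. reflexivity.
Qed.

Lemma sub_dist_sym (M : MetricSpace) (P : M -> Prop) :
  forall a b, sub_dist M P a b = sub_dist M P b a.
Proof. intros; apply mdist_sym. Qed.

Lemma sub_dist_tri (M : MetricSpace) (P : M -> Prop) :
  forall a b c, sub_dist M P a c <= sub_dist M P a b + sub_dist M P b c.
Proof. intros; apply mdist_tri. Qed.

Definition subspace (M : MetricSpace) (P : M -> Prop) : MetricSpace :=
  MkMetricSpace {x : M | P x} (sub_dist M P)
    (sub_dist_eq0 M P) (sub_dist_sym M P) (sub_dist_tri M P).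

(* Main.v *)
Require Import Defs.
From Stdlib Require Import Reals Lra List ProofIrrelevance.
Open Scope R_scope.

Lemma sig_inj (M : MetricSpace) (P : M -> Prop) (a b : {x : M | P x}) :
  proj1_sig a = proj1_sig b -> a = b.
Proof.
  destruct a as [a Ha], b as [b Hb]; simpl; intro E; subst b.
  f_equal; apply proof_irrelevance.
Qed.

Lemma comp_ext (X : MetricSpace) (C F F' : mset X) :
  is_component C F -> (forall x, F x <-> F' x) -> is_component C F'.
Proof.
  intros [H1 [H2 [H3 H4]]] E; split; [|split; [|split]]; auto.
  - intros x Hx; apply E; auto.
  - intros D HD HCD HDF; apply H4; auto; intros x Hx; apply E; auto.
Qed.

Lemma mdist_refl (M : MetricSpace) (x : M) : mdist x x = 0.
Proof. apply mdist_eq0; reflexivity. Qed.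

Lemma margin (X M : MetricSpace) (U : mset M) (f0 : X -> M) :
  compact_space X -> continuous f0 -> is_open U -> (forall x, U (f0 x)) ->
  exists d, 0 < d /\ forall x y, mdist (f0 x) y < d -> U y.
Proof.
  intros HX Hf HU HfU.
  set (I := {p : X * R | 0 < snd p /\ forall y, mdist (f0 (fst p)) y < snd p -> U y}).
  set (V := fun (i : I) (x' : X) =>
        mdist (f0 (fst (proj1_sig i))) (f0 x') < snd (proj1_sig i) / 2).
  destruct (HX I V) as [l Hl].
  - intros [[c s] [Hs Hcs]] x' Hx'. unfold V in *; simpl in *.
    set (r := s / 2 - mdist (f0 c) (f0 x')).
    assert (Hr : 0 < r) by (unfold r; lra).
    destruct (Hf x' r Hr) as [d [Hd Hd2]].
    exists d; split; auto. intros y Hy.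
    pose proof (Hd2 y Hy). pose proof (mdist_tri M (f0 c) (f0 x') (f0 y)).
    unfold r in *; lra.
  - intros x' _.
    destruct (HU (f0 x') (HfU x')) as [e [He He2]].
    exists (exist _ (x', e) (conj He He2)). unfold V; simpl.
    rewrite mdist_refl; lra.
  - set (d := fold_right (fun (i : I) acc => Rmin (snd (proj1_sig i) / 2) acc) 1 l).
    assert (Hpos : 0 < d /\ forall i, In i l -> d <= snd (proj1_sig i) / 2).
    { unfold d; clear Hl; induction l as [|i l IH]; simpl.
      - split; [lra | tauto].
      - destruct IH as [IH1 IH2].
        destruct (proj2_sig i) as [Hs _].
        split.
        + apply Rmin_glb_lt; lra.
        + intros j [E|Hj].
          * subst j; apply Rmin_l.
          * eapply Rle_trans; [apply Rmin_r | auto]. }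
    destruct Hpos as [Hd1 Hd2].
    exists d; split; auto.
    intros x y Hxy.
    destruct (Hl x Logic.I) as [i [Hi HV]].
    pose proof (Hd2 i Hi).
    destruct i as [[c s] [Hs Hcs]]; unfold V in HV; simpl in *.
    apply Hcs.
    pose proof (mdist_tri M (f0 c) (f0 x) y). lra.
Qed.

Lemma image_compact (X M : MetricSpace) (f : X -> M) :
  compact_space X -> continuous f -> is_compact (fun y => exists x, y = f x).
Proof.
  intros HX Hf I U HU Hcov.
  destruct (HX I (fun i x => U i (f x))) as [l Hl].
  - intros i x Hx. destruct (HU i (f x) Hx) as [e [He He2]].
    destruct (Hf x e He) as [d [Hd Hd2]].
    exists d; split; auto.
  - intros x _. apply Hcov. exists x; reflexivity.
  - exists l. intros y [x E]; subst y. apply Hl; exact Logic.I.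
Qed.

Theorem proposition3p1 (M : MetricSpace) :
  (krasinkiewicz_space M ->
     forall U : mset M, is_open U -> krasinkiewicz_space (subspace M U))
  /\
  ((forall K : mset M, is_compact K ->
      exists S : mset M, subset K S /\ krasinkiewicz_space (subspace M S)) ->
   krasinkiewicz_space M).
Proof.
  split.
  - intros HK U HU X HX f Hf eps Heps.
    set (f0 := fun x => proj1_sig (f x) : M).
    assert (Hf0 : continuous f0) by exact Hf.
    destruct (margin X M U f0 HX Hf0 HU (fun x => proj2_sig (f x))) as [d [Hd Hd2]].
    destruct (HK X HX f0 Hf0 (Rmin eps d) (Rmin_glb_lt _ _ _ Heps Hd))
      as [g [Hg [Hkg Hdist]]].
    assert (HgU : forall x, U (g x)).
    { intro x. apply (Hd2 x). eapply Rlt_le_trans; [apply Hdist | apply Rmin_r]. }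
    exists (fun x => exist U (g x) (HgU x)).
    split; [|split].
    + exact Hg.
    + intros K HKc.
      destruct (Hkg K HKc) as [[y Hy]|[y [C [HC HCK]]]].
      * left. destruct HKc as [[x0 Hx0] _].
        exists (exist U (g x0) (HgU x0)). intros x Hx. unfold fiber.
        apply sig_inj; simpl. rewrite (Hy x Hx), (Hy x0 Hx0). reflexivity.
      * right. destruct HC as [[x0 Hx0] HCr].
        assert (Hy0 : g x0 = y) by exact (proj1 HCr x0 Hx0).
        exists (exist U (g x0) (HgU x0)), C. split; auto.
        apply comp_ext with (fiber g y). exact (conj (ex_intro _ x0 Hx0) HCr).
        intro x; unfold fiber; split; intro E.
        -- apply sig_inj; simpl. rewrite E; auto.
        -- apply (f_equal (@proj1_sig _ _)) in E; simpl in E. rewrite E; auto.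
    + intro x. simpl. unfold sub_dist; simpl.
      eapply Rlt_le_trans; [apply Hdist | apply Rmin_l].
  - intros HS X HX f Hf eps Heps.
    destruct (HS _ (image_compact X M f HX Hf)) as [S [HKS HSK]].
    set (f' := fun x => exist S (f x) (HKS (f x) (ex_intro _ x eq_refl))
                : subspace M S).
    assert (Hf' : continuous f') by exact Hf.
    destruct (HSK X HX f' Hf' eps Heps) as [g' [Hg' [Hkg Hdist]]].
    exists (fun x => proj1_sig (g' x)).
    split; [|split].
    + exact Hg'.
    + intros K HKc.
      destruct (Hkg K HKc) as [[y Hy]|[y [C [HC HCK]]]].
      * left. exists (proj1_sig y). intros x Hx. unfold fiber.
        pose proof (Hy x Hx) as E. unfold fiber in E. rewrite E; reflexivity.
      * right. exists (proj1_sig y), C. split; auto.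
        apply comp_ext with (fiber g' y); auto.
        intro x; unfold fiber; split; intro E.
        -- rewrite E; reflexivity.
        -- apply sig_inj; exact E.
    + intro x. exact (Hdist x).
Qed.
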